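(* Let $G$ be a finite, simple, connected, triangle-free cubic graph. If $G$ has a bridge, then for every valid labeling $\Lambda$ of $\mathfrak{L}_2(G)$ there is a reduced clique $\mathbb{X}\in\mathcal{X}$ which is a Type A self-intersection of some cycle in $\Gamma_\Lambda$.
   Context: $\mathcal{L}(H)$ is the line graph of $H$. Let $\mathcal{T}$ be the set of triangles of $\mathcal{L}(\mathcal{L}(G))$ formed by the three edges of a triangle of $\mathcal{L}(G)$. $\mathfrak{L}_2(G)$ has the vertex set of $\mathcal{L}(\mathcal{L}(G))$ and the edges of $\mathcal{L}(\mathcal{L}(G))$ not in any triangle of $\mathcal{T}$. For each edge $e$ of $G$, the reduced clique $\mathbb{X}_e$ is the subgraph of $\mathfrak{L}_2(G)$ on the four edges of $\mathcal{L}(G)$ incident to $e$, with all edges of $\mathfrak{L}_2(G)$ among them; it is a 4-cycle. $\mathcal{X}$ is the set of reduced cliques. A labeling $\Lambda$ gives each edge of $\mathfrak{L}_2(G)$ a label in $\{0,1\}$ ($1$ = open); it is valid if in every reduced clique each vertex is incident to two edges of that clique with different labels. $\Gamma_\Lambda$ is the set of connected components (cycles) of the subgraph formed by open edges. $\mathbb{X}$ is a self-intersection of $\gamma\in\Gamma_\Lambda$ if both open edges of $\mathbb{X}$ lie on $\gamma$. Writing $\mathbb{X}$ as the 4-cycle $(x_1,x_2,x_3,x_4)$ with open edges $x_1x_2,x_3x_4$, deleting them from $\gamma$ leaves two vertex-disjoint paths with endpoints $x_1,\dots,x_4$; the self-intersection is of Type A if these paths connect $x_1$ with $x_3$ and $x_2$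 with $x_4$ (and of Type B if they connect $x_2$ with $x_3$ and $x_4$ with $x_1$). *)

(* Defs.v *)
From mathcomp Require Import all_boot.
Set Implicit Arguments. Unset Strict Implicit. Unset Printing Implicit Defensive.

(* A finite simple graph: a finType V with a symmetric irreflexive relation adj.
   Edges are represented as 2-element sets. *)

Section Graphs.
Variable V : finType.
Variable adj : rel V.

Definition connected_graph := forall x y : V, connect adj x y.
Definition cubic := forall x : V, #|[set y | adj x y]| = 3.
Definition triangle_free := forall x y z : V, ~~ [&& adj x y, adj y z & adj x z].

Definition gedges : {set {set V}} := [set s : {set V} | [exists x : V, exists y : V, adj x y && (s == [set x; y])]].

Definition is_bridge (u v : V) :=
  adj u v /\
  ~~ connect (fun x y => adj x y && ([set x; y] != [set u; v])) u v.
Definition has_bridge := exists u v : V, is_bridge u v.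
End Graphs.

(* Line graph edges: for a graph with edge set E (vertex set = E of the line graph),
   the edges of the line graph are pairs of distinct edges sharing an endpoint. *)
Definition line_edges (T : finType) (E : {set {set T}}) : {set {set {set T}}} :=
  [set s : {set {set T}} | [exists e in E, exists f in E,
     [&& e != f, e :&: f != set0 & s == [set e; f]]]].

Section L2.
Variable V : finType.
Variable adj : rel V.

(* edges of L(G) = vertices of L(L(G)) *)
Definition LG_edges : {set {set {set V}}} := line_edges (gedges adj).
Definition LLG_edges : {set {set {set {set V}}}} := line_edges LG_edges.

(* f (an edge of L(L(G))) lies in a triangle of L(L(G)) formed by the three
   edges of a triangle {a,b,c} of L(G) *)
Definition in_T_triangle (f : {set {set {set V}}}) :=
  [exists a : {set V}, exists b : {set V}, exists c : {set V},
     [&& [set a; b] \in LG_edges, [set b; c] \in LG_edges, [set a; c] \in LG_edges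
       & f \subset [set [set a; b]; [set b; c]; [set a; c]]]].

(* edges of frak L_2(G); its vertex set is LG_edges *)
Definition L2_edges : {set {set {set {set V}}}} :=
  [set f in LLG_edges | ~~ in_T_triangle f].

Definition rc_verts (e : {set V}) : {set {set {set V}}} :=
  [set x in LG_edges | e \in x].
Definition rc_edges (e : {set V}) : {set {set {set {set V}}}} :=
  [set f in L2_edges | f \subset rc_verts e].

Variable Lam : {set {set {set V}}} -> bool. (* labeling, 1 = open *)

Definition valid_labeling :=
  forall e, e \in gedges adj -> forall x, x \in rc_verts e ->
  forall f1 f2, f1 \in rc_edges e -> f2 \in rc_edges e ->
    x \in f1 -> x \in f2 -> f1 != f2 -> Lam f1 != Lam f2.

Definition open_adj : rel {set {set V}} :=
  fun x y => ([set x; y] \in L2_edges) && Lam [set x; y].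

(* Gamma_Lambda: vertex sets of the connected components of the open subgraph *)
Definition Gamma : {set {set {set {set V}}}} :=
  [set [set y | connect open_adj x y] | x in LG_edges & [exists y, open_adj x y]].

Definition typeA_selfint (e : {set V}) (gamma : {set {set {set V}}}) :=
  exists x1 x2 x3 x4 : {set {set V}},
    [/\ uniq [:: x1; x2; x3; x4],
        [/\ x1 \in rc_verts e, x2 \in rc_verts e, x3 \in rc_verts e & x4 \in rc_verts e],
        [/\ [set x1; x2] \in rc_edges e, [set x2; x3] \in rc_edges e,
            [set x3; x4] \in rc_edges e & [set x4; x1] \in rc_edges e],
        [/\ Lam [set x1; x2], Lam [set x3; x4], ~~ Lam [set x2; x3] & ~~ Lam [set x4; x1]]
      & ([set x1; x2] \subset gamma) && ([set x3; x4] \subset gamma)] /\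
        let rem := fun x y => [&& open_adj x y, x \in gamma, y \in gamma,
                                  [set x; y] != [set x1; x2] & [set x; y] != [set x3; x4]] in
        connect rem x1 x3 /\ connect rem x2 x4.
End L2.

(* Main.v *)
Require Import Defs.
From mathcomp Require Import all_boot.
Set Implicit Arguments. Unset Strict Implicit. Unset Printing Implicit Defensive.

Lemma set2_eqP (T : finType) (a b c d : T) :
  [set a; b] = [set c; d] -> (a = c /\ b = d) \/ (a = d /\ b = c).
Proof.
move=> H.
have ha : a \in [set c; d] by rewrite -H set21.
have hb : b \in [set c; d] by rewrite -H set22.
have hc : c \in [set a; b] by rewrite H set21.
have hd : d \in [set a; b] by rewrite H set22.
move: ha hb hc hd; rewrite !inE.
case/orP=> /eqP ea; case/orP=> /eqP eb; subst.
- by move=> _ /orP[] /eqP ->; left.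
- by left.
- by right.
- by move=> /orP[] /eqP -> _; right.
Qed.

Lemma set2_linj (T : finType) (f g h : T) : [set f; g] = [set f; h] -> g = h.
Proof. by case/set2_eqP=> [[_ ->]|[-> ->]]. Qed.

Lemma set2_sub (T : finType) (f g p q : T) :
  f != g -> f \in [set p; q] -> g \in [set p; q] -> [set f; g] = [set p; q].
Proof.
rewrite !inE => fg; case/orP=> /eqP ef; case/orP=> /eqP eg; subst;
  rewrite ?eqxx // in fg *; by rewrite setUC.
Qed.

Lemma line_edgesP (T : finType) (E : {set {set T}}) s :
  s \in line_edges E -> exists e f, [/\ e \in E, f \in E, e != f, e :&: f != set0 & s = [set e; f]].
Proof.
rewrite inE => /existsP[e /andP[eE /existsP[f /andP[fE /and3P[ef ef0 /eqP ->]]]]].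
by exists e, f.
Qed.

Lemma line_edges_mk (T : finType) (E : {set {set T}}) e f :
  e \in E -> f \in E -> e != f -> e :&: f != set0 -> [set e; f] \in line_edges E.
Proof.
move=> eE fE ef ef0; rewrite inE; apply/existsP; exists e; rewrite eE /=.
by apply/existsP; exists f; rewrite fE ef ef0 eqxx.
Qed.

Lemma line_edges_irr (T : finType) (E : {set {set T}}) x :
  [set x; x] \notin line_edges E.
Proof.
apply/negP=> /line_edgesP[e [f [_ _ ef _ H]]].
by case: (set2_eqP H)=> [[e1 e2]|[e1 e2]]; move: ef; rewrite -e1 -e2 eqxx.
Qed.

Lemma line_edges_at (T : finType) (E : {set {set T}}) y f :
  y \in line_edges E -> f \in y ->
  exists h, [/\ f \in E, h \in E, h != f, f :&: h != set0 & y = [set f; h]].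
Proof.
move=> /line_edgesP[p [q [pE qE pq pq0 ->]]]; rewrite !inE.
case/orP=> /eqP ->.
  by exists q; rewrite eq_sym.
by exists p; rewrite setIC setUC.
Qed.

Lemma line_edges_sym (T : finType) (E : {set {set T}}) s :
  s \in line_edges E -> s \subset E.
Proof.
move=> /line_edgesP[p [q [pE qE _ _ ->]]].
by apply/subsetP=> z; rewrite !inE; case/orP=> /eqP ->.
Qed.

Lemma handshake (T : finType) (r : rel T) (S : {set T}) :
  symmetric r -> irreflexive r ->
  (forall x y, x \in S -> r x y -> y \in S) ->
  ~~ odd (\sum_(x in S) #|[set y | r x y]|).
Proof.
move=> rs ri cl.
have E1 : \sum_(x in S) #|[set y | r x y]| =
  \sum_(x in S) \sum_(y in S) ((r x y && (enum_rank x < enum_rank y)) +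
                               (r x y && (enum_rank y < enum_rank x)))%N.
  apply: eq_bigr=> x xS.
  rewrite -sum1_card big_mkcond [RHS]big_mkcond /=.
  apply: eq_bigr=> y _; rewrite inE.
  case rxy: (r x y) => /=; last by case: (y \in S).
  rewrite (cl x y xS rxy).
  have: enum_rank x != enum_rank y.
    apply/negP=> /eqP /enum_rank_inj exy; by rewrite exy ri in rxy.
  rewrite neq_ltn; case/orP=> h; rewrite h //.
    by rewrite ltnNge ltnW.
  by rewrite ltnNge ltnW.
rewrite E1.
have E2 : \sum_(x in S) \sum_(y in S) ((r x y && (enum_rank x < enum_rank y)) +
                               (r x y && (enum_rank y < enum_rank x)))%N =
  ((\sum_(x in S) \sum_(y in S) (r x y && (enum_rank x < enum_rank y)) : nat) +
   \sum_(x in S) \sum_(y in S) (r x y && (enum_rank y < enum_rank x)))%N.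
  rewrite -big_split /=; apply: eq_bigr=> x _; by rewrite -big_split.
rewrite E2 [X in (_ + X)%N]exchange_big /=.
have E3 : (\sum_(j in S) \sum_(i in S) (r i j && (enum_rank j < enum_rank i)) : nat) =
   \sum_(x in S) \sum_(y in S) (r x y && (enum_rank x < enum_rank y)).
  by apply: eq_bigr=> j _; apply: eq_bigr=> i _; rewrite rs.
by rewrite E3 addnn odd_double.
Qed.

Lemma odd_reach (T : finType) (r : rel T) s :
  symmetric r -> irreflexive r -> odd #|[set y | r s y]| ->
  exists x, [/\ connect r s x, x != s & odd #|[set y | r x y]|].
Proof.
move=> rs ri od.
set S := [set x | connect r s x].
have cl : forall x y, x \in S -> r x y -> y \in S.
  by move=> x y; rewrite !inE => sx rxy; apply: connect_trans sx (connect1 rxy).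
have := handshake rs ri cl.
have sS : s \in S by rewrite inE connect0.
rewrite (bigD1 s sS) /= oddD od /= negbK => oS.
case: (boolP [exists x, [&& connect r s x, x != s & odd #|[set y | r x y]|]]).
  by move=> /existsP[x /and3P[? ? ?]]; exists x.
move=> H; exfalso; move: oS; apply/negP.
apply: (big_ind (fun n => ~~ odd n)) => //.
  by move=> m n hm hn; rewrite oddD (negbTE hm) (negbTE hn).
move=> x /andP[xS xs]; apply/negP=> ox; move/negP: H; apply; apply/existsP; exists x.
have xS' : x \in S := xS.
by move: xS'; rewrite inE => ->; rewrite xs ox.
Qed.

Lemma connect_inv (T : finType) (r : rel T) (P : T -> Prop) x y :
  (forall a b, r a b -> P a -> P b) -> connect r x y -> P x -> P y.
Proof.
move=> H /connectP[p pth ->]; elim: p x pth => //= z p IH x /andP[rxz pth] Px.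
by apply: IH pth (H _ _ rxz Px).
Qed.

Lemma connect_mono_inv (T : finType) (r1 r2 : rel T) (P : T -> Prop) x y :
  (forall a b, r1 a b -> P a -> r2 a b /\ P b) -> connect r1 x y -> P x -> connect r2 x y.
Proof.
move=> H /connectP[p pth ->]; elim: p x pth => //= z p IH x /andP[rxz pth] Px.
have [r2xz Pz] := H _ _ rxz Px.
by apply: connect_trans (connect1 r2xz) (IH z pth Pz).
Qed.

Section G.
Variables (V : finType) (adj : rel V).
Hypotheses (Hsym : symmetric adj) (Hirr : irreflexive adj)
  (Hcub : cubic adj) (Htf : triangle_free adj).

Lemma gedge_mk x y : adj x y -> [set x; y] \in gedges adj.
Proof.
move=> a; rewrite inE; apply/existsP; exists x; apply/existsP; exists y.
by rewrite a eqxx.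
Qed.

Lemma gedge_at h w : h \in gedges adj -> w \in h -> exists r, adj w r /\ h = [set w; r].
Proof.
rewrite inE => /existsP[x /existsP[y /andP[a /eqP ->]]]; rewrite !inE.
case/orP=> /eqP ->; first by exists y.
by exists x; rewrite Hsym a setUC.
Qed.

Lemma nbr3 w z : adj w z -> exists s1 s2, [/\ adj w s1, adj w s2, s1 != s2, s1 != z & s2 != z] /\
  forall r, adj w r -> [|| r == z, r == s1 | r == s2].
Proof.
move=> a; have := Hcub w; rewrite (cardsD1 z) inE a add1n => -[] /eqP /cards2P [s1 [s2 [ne E]]].
have: s1 \in [set y | adj w y] :\ z by rewrite E set21.
rewrite !inE => /andP[n1 a1].
have: s2 \in [set y | adj w y] :\ z by rewrite E set22.
rewrite !inE => /andP[n2 a2].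
exists s1, s2; split => // r ar.
case: (r =P z) => // /eqP nr /=.
have: r \in [set y | adj w y] :\ z by rewrite !inE nr ar.
by rewrite E !inE.
Qed.

Lemma G_meet (T : finType) (x y : {set T}) c : c \in x -> c \in y -> x :&: y != set0.
Proof. by move=> cx cy; apply/set0Pn; exists c; rewrite inE cx cy. Qed.

Lemma LG_mk2 w z t : adj w z -> adj w t -> z != t -> [set [set w; z]; [set w; t]] \in LG_edges adj.
Proof.
move=> awz awt zt; apply: line_edges_mk; try exact: gedge_mk.
  by apply/negP=> /eqP /set2_linj /eqP; rewrite (negbTE zt).
by apply: (G_meet (c := w)); rewrite set21.
Qed.

Lemma line_edges_facts (T : finType) (E : {set {set T}}) x y :
  [set x; y] \in line_edges E -> [/\ x \in E, y \in E, x != y & x :&: y != set0].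
Proof.
move=> /line_edgesP[p [q [pE qE pq pq0 H]]].
case: (set2_eqP H)=> [[-> ->]|[-> ->]]; first by [].
by rewrite eq_sym setIC.
Qed.

Lemma line_edges_meet (T : finType) (E : {set {set T}}) g h :
  [set g; h] \in line_edges E -> g :&: h != set0.
Proof. by case/line_edges_facts. Qed.

Lemma T_mem (T : finType) (a b c g : T) (x : {set T}) :
  x \in [set [set a; b]; [set b; c]; [set a; c]] -> g \in x -> g \in [set a; b; c].
Proof.
rewrite !inE => /orP[/orP[]|] /eqP -> ; rewrite !inE;
  by case/orP=> ->; rewrite ?orbT.
Qed.

Lemma pair_in (T : finType) (a b c g h : T) :
  g \in [set a; b; c] -> h \in [set a; b; c] -> g != h ->
  [set g; h] \in [set [set a; b]; [set b; c]; [set a; c]].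
Proof.
rewrite !inE => /orP[/orP[]|] /eqP -> /orP[/orP[]|] /eqP ->; rewrite ?eqxx //= => _;
  by rewrite ?eqxx ?orbT // [[set _; _]]setUC eqxx ?orbT.
Qed.

Lemma L2_LLG (s : {set {set {set V}}}) : s \in L2_edges adj -> s \in LLG_edges adj.
Proof. by rewrite inE => /andP[]. Qed.

Lemma Lstruct_a w z t s : adj w z -> adj w t -> t != z -> adj z s -> s != w ->
  [set [set [set w; z]; [set w; t]]; [set [set w; z]; [set z; s]]] \in L2_edges adj.
Proof.
move=> awz awt tz azs sw.
have zt : z != t by rewrite eq_sym.
have xLG := LG_mk2 awz awt zt.
have yLG : [set [set w; z]; [set z; s]] \in LG_edges adj.
  apply: line_edges_mk; try exact: gedge_mk.
    apply/negP=> /eqP /set2_eqP [[wz _]|[ws _]].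
      by move: awz; rewrite wz Hirr.
    by move: sw; rewrite ws eqxx.
  by apply: (G_meet (c := z)); rewrite ?set21 ?set22.
rewrite inE; apply/andP; split.
  apply: line_edges_mk => //.
    apply/negP=> /eqP /set2_linj /set2_eqP [[wz _]|[ws _]].
      by move: awz; rewrite wz Hirr.
    by move: sw; rewrite ws eqxx.
  by apply: (G_meet (c := [set w; z])); rewrite set21.
apply/negP => /existsP[a /existsP[b /existsP[c /and4P[ab bc ac sub]]]].
have xT := subsetP sub _ (set21 _ _).
have yT := subsetP sub _ (set22 _ _).
have gm := T_mem xT (set22 _ _).
have hm := T_mem yT (set22 _ _).
have gh : [set w; t] != [set z; s].
  apply/negP=> /eqP /set2_eqP [[wz _]|[ws _]].
    by move: awz; rewrite wz Hirr.
  by move: sw; rewrite ws eqxx.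
have LGgh : [set [set w; t]; [set z; s]] \in LG_edges adj.
  have P := pair_in gm hm gh; rewrite !inE in P.
  by case/orP: P => [/orP[]|] /eqP ->.
move: LGgh => /line_edges_meet /set0Pn [k].
rewrite !inE => /andP[/orP[] /eqP -> /orP[] /eqP e].
- by move: awz; rewrite e Hirr.
- by move: sw; rewrite e eqxx.
- by move: tz; rewrite e eqxx.
- by move: azs (Htf w z t); rewrite -e => ->; rewrite awz awt.
Qed.

Lemma inT_mk f g h : [set f; g] \in LG_edges adj -> [set g; h] \in LG_edges adj ->
  [set f; h] \in LG_edges adj -> in_T_triangle adj [set [set f; g]; [set f; h]].
Proof.
move=> fg gh fh; apply/existsP; exists f; apply/existsP; exists g; apply/existsP; exists h.
rewrite fg gh fh /=; apply/subsetP => k; rewrite !inE => /orP[] /eqP ->; by rewrite eqxx ?orbT.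
Qed.

Lemma L2_notT s : s \in L2_edges adj -> ~~ in_T_triangle adj s.
Proof. by rewrite inE => /andP[]. Qed.

Lemma Lstruct_b w z t s1 s2 y : adj w z -> adj w t -> t != z ->
  (forall r, adj z r -> [|| r == w, r == s1 | r == s2]) ->
  y \in LG_edges adj -> [set w; z] \in y ->
  [set [set [set w; z]; [set w; t]]; y] \in L2_edges adj ->
  y = [set [set w; z]; [set z; s1]] \/ y = [set [set w; z]; [set z; s2]].
Proof.
move=> awz awt tz compl yLG fy L2.
have zt : z != t by rewrite eq_sym.
have xLG := LG_mk2 awz awt zt.
have [h [fE hE hf fh ey]] := line_edges_at yLG fy; subst y.
have [c] := set0Pn _ fh; rewrite inE => /andP[cf ch].
move: cf; rewrite !inE => /orP[] /eqP ec; subst c.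
- have [r [awr hr]] := gedge_at hE ch; subst h.
  case: (r =P z) => [rz|/eqP rz]; first by move: hf; rewrite rz eqxx.
  case: (r =P t) => [rt|/eqP rt].
    by move: L2; rewrite rt => /L2_LLG H; exfalso; move: H; apply/negP; apply: line_edges_irr.
  exfalso; move: (L2_notT L2); apply/negP/negPn; apply: inT_mk => //.
    by apply: LG_mk2 => //; rewrite eq_sym.
- have [r [azr hr]] := gedge_at hE ch; subst h.
  move: (compl r azr) => /or3P[] /eqP rr; subst r.
  + by move: hf; rewrite setUC eqxx.
  + by left.
  + by right.
Qed.

Section Lab.
Variable Lam : {set {set {set V}}} -> bool.
Hypothesis Hvalid : valid_labeling adj Lam.

Lemma rc_mk e (X Y : {set {set V}}) : [set X; Y] \in L2_edges adj -> e \in X -> e \in Y ->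
  [set X; Y] \in rc_edges adj e.
Proof.
move=> L eX eY; have [XL YL _ _] := line_edges_facts (L2_LLG L).
rewrite inE L /=; apply/subsetP=> k /set2P[] ->; by rewrite /rc_verts inE ?XL ?YL ?eX ?eY.
Qed.

Lemma Nf1 w z t s1 s2 : adj w z -> adj w t -> t != z ->
  adj z s1 -> adj z s2 -> s1 != s2 -> s1 != w -> s2 != w ->
  (forall r, adj z r -> [|| r == w, r == s1 | r == s2]) ->
  #|[set y | open_adj adj Lam [set [set w; z]; [set w; t]] y && ([set w; z] \in y)]| = 1.
Proof.
move=> awz awt tz az1 az2 s12 s1w s2w compl.
set f := [set w; z]; set x := [set f; [set w; t]].
set y1 := [set f; [set z; s1]]; set y2 := [set f; [set z; s2]].
have L1 : [set x; y1] \in L2_edges adj by apply: Lstruct_a.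
have L2 : [set x; y2] \in L2_edges adj by apply: Lstruct_a.
have fx : f \in x by rewrite set21.
have R1 := rc_mk L1 fx (set21 _ _).
have R2 := rc_mk L2 fx (set21 _ _).
have fE : f \in gedges adj by apply: gedge_mk.
have xv : x \in rc_verts adj f.
  by rewrite inE fx andbT; case: (line_edges_facts (L2_LLG L1)).
have ne : [set x; y1] != [set x; y2].
  apply/negP=> /eqP /set2_linj /set2_linj /set2_linj /eqP; by rewrite (negbTE s12).
have V12 := Hvalid fE xv R1 R2 (set21 _ _) (set21 _ _) ne.
have key : forall y, open_adj adj Lam x y && (f \in y) -> y = y1 \/ y = y2.
  move=> y /andP[/andP[L _] fy].
  have [_ yL _ _] := line_edges_facts (L2_LLG L).
  exact: (Lstruct_b awz awt tz compl yL fy L).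
case l1: (Lam [set x; y1]).
  rewrite -(cards1 y1); apply: eq_card => y; rewrite !inE.
  apply/idP/idP.
    move=> H; case: (key y H) => ey; subst y; rewrite ?eqxx //.
    by move: H V12; rewrite l1 /open_adj => /andP[/andP[_ ->]].
  move=> /eqP ->; by rewrite /open_adj L1 l1 set21.
rewrite -(cards1 y2); apply: eq_card => y; rewrite !inE.
apply/idP/idP.
  move=> H; case: (key y H) => ey; subst y; rewrite ?eqxx //.
  by move: H; rewrite /open_adj l1 andbF.
move=> /eqP ->; move: V12; rewrite l1 /open_adj L2 set21 /=; by case: (Lam _).
Qed.



Lemma Ndeg x f : x \in LG_edges adj -> f \in x ->
  #|[set y | open_adj adj Lam x y && (f \in y)]| = 1.
Proof.
move=> xL fx; have [g [fE gE gf fg ex]] := line_edges_at xL fx; subst x.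
have [c] := set0Pn _ fg; rewrite inE => /andP[cf cg].
have [z [acz ef]] := gedge_at fE cf.
have [t [act eg]] := gedge_at gE cg.
subst f g.
have tz : t != z by apply/negP => /eqP tz; move: gf; rewrite tz eqxx.
have azc : adj z c by rewrite Hsym.
have [s1 [s2 [[a1 a2 s12 s1c s2c] compl]]] := nbr3 azc.
exact: (Nf1 acz act tz a1 a2 s12 s1c s2c compl).
Qed.

Lemma open_cases f g x y : x = [set f; g] -> f != g -> open_adj adj Lam x y ->
  ((f \in y) || (g \in y)) && ~~ ((f \in y) && (g \in y)).
Proof.
move=> ex fg /andP[L _]; have [xL yL xy xy0] := line_edges_facts (L2_LLG L).
have [k] := set0Pn _ xy0; rewrite inE => /andP[kx ky].
apply/andP; split.
  by move: kx; rewrite ex => /set2P[] ek; subst k; rewrite ky ?orbT.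
apply/negP => /andP[fy gy].
have [p [q [pE qE pq pq0 ey]]] := line_edgesP yL; subst y.
by move: xy; rewrite ex (set2_sub fg fy gy) eqxx.
Qed.

Definition remE e x y := open_adj adj Lam x y && ~~ ((e \in x) && (e \in y)).

Lemma deg_odd e x : odd #|[set y | remE e x y]| = (x \in LG_edges adj) && (e \in x).
Proof.
case xL: (x \in LG_edges adj) => /=; last first.
  rewrite (_ : [set y | remE e x y] = set0) ?cards0 //.
  apply/setP=> y; rewrite inE in_set0 /remE /open_adj.
  apply/negP => /andP[/andP[L _] _].
  have [xL' _ _ _] := line_edges_facts (L2_LLG L).
  by rewrite xL' in xL.
case ex: (e \in x).
  have [g [eE gE ge eg0 exx]] := line_edges_at xL ex.
  have gx : g \in x by rewrite exx set22.
  have eg : e != g by rewrite eq_sym.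
  have -> : #|[set y | remE e x y]| = #|[set y | open_adj adj Lam x y && (g \in y)]|.
    apply: eq_card => y; rewrite !inE /remE ex /=.
    case O: (open_adj adj Lam x y) => //=.
    have := open_cases exx eg O.
    by case: (e \in y); case: (g \in y).
  by rewrite (Ndeg xL gx).
have [f [g [fE gE fg fg0 exx]]] := line_edgesP xL.
have fx : f \in x by rewrite exx set21.
have gx : g \in x by rewrite exx set22.
have -> : [set y | remE e x y] = [set y | open_adj adj Lam x y && (f \in y)] :|:
                                 [set y | open_adj adj Lam x y && (g \in y)].
  apply/setP => y; rewrite !inE /remE ex /=.
  case O: (open_adj adj Lam x y) => //=.
  by case/andP: (open_cases exx fg O).
rewrite cardsU (Ndeg xL fx) (Ndeg xL gx).
have -> : [set y | open_adj adj Lam x y && (f \in y)] :&: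
          [set y | open_adj adj Lam x y && (g \in y)] = set0.
  apply/setP=> y; rewrite !inE.
  case O: (open_adj adj Lam x y) => //=.
  have := open_cases exx fg O.
  by case: (f \in y); case: (g \in y).
by rewrite cards0.
Qed.

Lemma remE_sym e : symmetric (remE e).
Proof.
move=> x y; rewrite /remE /open_adj [[set y; x]]setUC.
by congr (_ && ~~ _); rewrite andbC.
Qed.

Lemma remE_irr e : irreflexive (remE e).
Proof.
move=> x; rewrite /remE /open_adj; apply/negP => /andP[/andP[/L2_LLG L _] _].
by move: L; apply/negP; apply: line_edges_irr.
Qed.

Lemma ReachB u v a b e : e = [set u; v] -> adj u v -> adj u a -> adj u b ->
  a != b -> a != v -> b != v ->
  (forall r, adj u r -> [|| r == v, r == a | r == b]) ->
  ~~ connect (fun x y => adj x y && ([set x; y] != e)) u v ->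
  connect (remE e) [set e; [set u; a]] [set e; [set u; b]].
Proof.
move=> He auv aua aub ab av bv compl br.
set adjE := (fun x y => adj x y && ([set x; y] != e)) in br.
have AL : [set e; [set u; a]] \in LG_edges adj.
  by rewrite He; apply: LG_mk2 => //; rewrite eq_sym.
have od : odd #|[set y | remE e [set e; [set u; a]] y]| by rewrite deg_odd AL set21.
have [x [cx xA ox]] := odd_reach (remE_sym e) (remE_irr e) od.
move: ox; rewrite deg_odd => /andP[xL ex].
pose P (y : {set {set V}}) := exists w, connect adjE u w /\ forall h, h \in y -> w \in h.
have PA : P [set e; [set u; a]].
  exists u; split; first exact: connect0.
  by move=> h /set2P[] ->; rewrite ?He set21.
have step : forall y z, remE e y z -> P y -> P z.
  move=> y z /andP[/andP[L _] ne] [w [cw hw]].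
  have [yL zL _ yz0] := line_edges_facts (L2_LLG L).
  have [k] := set0Pn _ yz0; rewrite inE => /andP[ky kz].
  have ke : k != e by apply/negP=> /eqP ke; subst k; rewrite ky kz in ne.
  have [k' [kE k'E _ kk' ez]] := line_edges_at zL kz.
  have [c] := set0Pn _ kk'; rewrite inE => /andP[ck ck'].
  have [r [awr ekr]] := gedge_at kE (hw k ky).
  exists c; split; last by rewrite ez => h /set2P[] ->.
  move: ck; rewrite ekr => /set2P[] ->; first exact cw.
  by apply: connect_trans cw (connect1 _); rewrite /adjE /= awr -ekr ke.
have Px := connect_inv step cx PA.
have [h [eE hE he eh0 exh]] := line_edges_at xL ex.
case: Px => w [cw hw].
have we : w \in e by apply: hw; rewrite exh set21.
have wh : w \in h by apply: hw; rewrite exh set22.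
rewrite He in we; case/set2P: we => ew; subst w; last by rewrite cw in br.
have [r [aur ehr]] := gedge_at hE wh.
move: (compl r aur) => /or3P[] /eqP er; subst r.
- by move: he; rewrite ehr He eqxx.
- by move: xA; rewrite exh ehr eqxx.
- by rewrite exh ehr in cx.
Qed.

Lemma labA u v a c d : adj u v -> adj u a -> a != v -> adj v c -> adj v d -> c != d ->
  c != u -> d != u ->
  Lam [set [set [set u; v]; [set u; a]]; [set [set u; v]; [set v; c]]] ||
  Lam [set [set [set u; v]; [set u; a]]; [set [set u; v]; [set v; d]]].
Proof using Hsym Hirr Hcub Htf Hvalid.
move=> auv aua av avc avd cd cu du.
set e := [set u; v].
set A := [set e; [set u; a]].
set C := [set e; [set v; c]]; set D := [set e; [set v; d]].
have eG : e \in gedges adj by apply: gedge_mk.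
have LAC : [set A; C] \in L2_edges adj by exact: (Lstruct_a auv aua av avc cu).
have LAD : [set A; D] \in L2_edges adj by exact: (Lstruct_a auv aua av avd du).
have RAC := rc_mk LAC (set21 _ _) (set21 _ _).
have RAD := rc_mk LAD (set21 _ _) (set21 _ _).
have AV : A \in rc_verts adj e.
  by rewrite inE set21 andbT; case: (line_edges_facts (L2_LLG LAC)).
have ne : [set A; C] != [set A; D].
  by apply/negP => /eqP/set2_linj/set2_linj/set2_linj/eqP; rewrite (negbTE cd).
have := Hvalid eG AV RAC RAD (set21 _ _) (set21 _ _) ne.
by case: (Lam _); case: (Lam _).
Qed.

Lemma Fin u v a b c d :
  adj u v -> ~~ connect (fun x y => adj x y && ([set x; y] != [set u; v])) u v ->
  adj u a -> adj u b -> a != b -> a != v -> b != v ->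
  (forall r, adj u r -> [|| r == v, r == a | r == b]) ->
  adj v c -> adj v d -> c != d -> c != u -> d != u ->
  (forall r, adj v r -> [|| r == u, r == c | r == d]) ->
  Lam [set [set [set u; v]; [set u; a]]; [set [set u; v]; [set v; c]]] ->
  exists e, e \in gedges adj /\
    exists gamma, gamma \in Gamma adj Lam /\ typeA_selfint adj Lam e gamma.
Proof using Hsym Hirr Hcub Htf Hvalid.
move=> auv br aua aub ab av bv cu avc avd cd cu' du cv lAC.
have avu : adj v u by rewrite Hsym.
have symE : symmetric (fun x y => adj x y && ([set x; y] != [set u; v])).
  by move=> x y; rewrite /= Hsym [[set y; x]]setUC.
have br' : ~~ connect (fun x y => adj x y && ([set x; y] != [set u; v])) v u.
  by rewrite (sym_connect_sym symE).
have R1 := ReachB (erefl _) auv aua aub ab av bv cu br.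
have R2 := ReachB (setUC _ _) avu avc avd cd cu' du cv br'.
set e := [set u; v] in R1 R2 lAC *.
set A := [set e; [set u; a]] in R1 lAC *; set B := [set e; [set u; b]] in R1 *.
set C := [set e; [set v; c]] in R2 lAC *; set D := [set e; [set v; d]] in R2 *.
have eG : e \in gedges adj by apply: gedge_mk.
have LAC : [set A; C] \in L2_edges adj by exact: (Lstruct_a auv aua av avc cu').
have LAD : [set A; D] \in L2_edges adj by exact: (Lstruct_a auv aua av avd du).
have LBC : [set B; C] \in L2_edges adj by exact: (Lstruct_a auv aub bv avc cu').
have LBD : [set B; D] \in L2_edges adj by exact: (Lstruct_a auv aub bv avd du).
have eA : e \in A by rewrite set21.
have eB : e \in B by rewrite set21.
have eC : e \in C by rewrite set21.
have eD : e \in D by rewrite set21.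
have RAC := rc_mk LAC eA eC.
have RAD := rc_mk LAD eA eD.
have RBC := rc_mk LBC eB eC.
have RBD := rc_mk LBD eB eD.
have [AL CL nAC _] := line_edges_facts (L2_LLG LAC).
have [_ DL nAD _] := line_edges_facts (L2_LLG LAD).
have [BL _ nBC _] := line_edges_facts (L2_LLG LBC).
have [_ _ nBD _] := line_edges_facts (L2_LLG LBD).
have nAB : A != B by apply/negP => /eqP/set2_linj/set2_linj/eqP; rewrite (negbTE ab).
have nCD : C != D by apply/negP => /eqP/set2_linj/set2_linj/eqP; rewrite (negbTE cd).
have AV : A \in rc_verts adj e by rewrite inE AL eA.
have BV : B \in rc_verts adj e by rewrite inE BL eB.
have CV : C \in rc_verts adj e by rewrite inE CL eC.
have DV : D \in rc_verts adj e by rewrite inE DL eD.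
have nCD' : C != D := nCD.
have n1 : [set A; C] != [set A; D].
  by apply/negP => /eqP/set2_linj/eqP; rewrite (negbTE nCD).
have n2 : [set B; C] != [set B; D].
  by apply/negP => /eqP/set2_linj/eqP; rewrite (negbTE nCD).
have n3 : [set A; C] != [set B; C].
  by apply/negP => /eqP; rewrite [[set A; C]]setUC [[set B; C]]setUC => /set2_linj/eqP;
       rewrite (negbTE nAB).
have VA := Hvalid eG AV RAC RAD (set21 _ _) (set21 _ _) n1.
have VB := Hvalid eG BV RBC RBD (set21 _ _) (set21 _ _) n2.
have VC := Hvalid eG CV RAC RBC (set22 _ _) (set22 _ _) n3.
have lAD : ~~ Lam [set A; D] by move: VA; rewrite lAC; case: (Lam _).
have lBC : ~~ Lam [set B; C] by move: VC; rewrite lAC; case: (Lam _).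
have lBD : Lam [set B; D] by move: VB; rewrite (negbTE lBC); case: (Lam _).
have openR : forall x y, connect (remE e) x y -> connect (open_adj adj Lam) x y.
  move=> x y H; apply: (connect_mono_inv (P := fun _ => True)) H _ => //.
  by move=> p q /andP[O _] _.
set gamma := [set y | connect (open_adj adj Lam) A y].
have oAC : open_adj adj Lam A C by rewrite /open_adj LAC lAC.
have Ag : A \in gamma by rewrite inE connect0.
have Cg : C \in gamma by rewrite inE connect1.
have Bg : B \in gamma by rewrite inE openR.
have Dg : D \in gamma by rewrite inE (connect_trans (connect1 oAC) (openR _ _ R2)).
exists e; split => //; exists gamma; split.
  apply/imsetP; exists A => //.
  by rewrite inE AL /=; apply/existsP; exists C.
exists A, C, B, D; split.
  split.
  - rewrite /= !inE !negb_or nAC nAB nAD nCD nBD /=.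
    by rewrite eq_sym nBC.
  - by split.
  - split => //; by rewrite setUC.
  - split => //; by rewrite setUC.
  - by apply/andP; split; apply/subsetP => y /set2P[] ->.
have step : forall X Y, [set X; Y] = [set A; C] \/ [set X; Y] = [set B; D] -> e \in X /\ e \in Y.
  by move=> X Y [] /set2_eqP [[-> ->]|[-> ->]].
have key : forall x y, connect (remE e) x y -> x \in gamma ->
  connect (fun x y => [&& open_adj adj Lam x y, x \in gamma, y \in gamma,
                          [set x; y] != [set A; C] & [set x; y] != [set B; D]]) x y.
  move=> x y H xg; apply: (connect_mono_inv (P := fun y => y \in gamma)) H xg.
  move=> p q /andP[O ne] pg.
  have qg : q \in gamma by move: pg; rewrite !inE => pg; apply: connect_trans pg (connect1 O).
  split => //; rewrite O pg qg /=.
  apply/andP; split; apply/negP => /eqP E.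
    by have [e1 e2] := step p q (or_introl E); rewrite e1 e2 in ne.
  by have [e1 e2] := step p q (or_intror E); rewrite e1 e2 in ne.
by split; apply: key.
Qed.

End Lab.
End G.

Theorem lemma2p18 (V : finType) (adj : rel V)
  (Hsym : symmetric adj) (Hirr : irreflexive adj)
  (Hconn : connected_graph adj) (Hcub : cubic adj) (Htf : triangle_free adj)
  (Hbr : has_bridge adj)
  (Lam : {set {set {set V}}} -> bool) (Hvalid : valid_labeling adj Lam) :
  exists e, e \in gedges adj /\
    exists gamma, gamma \in Gamma adj Lam /\ typeA_selfint adj Lam e gamma.
Proof.
case: Hbr => u [v [auv br]].
have [a [b [[aua aub ab av bv] cu]]] := nbr3 Hcub auv.
have avu : adj v u by rewrite Hsym.
have [c [d [[avc avd cd cu' du] cv]]] := nbr3 Hcub avu.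
case/orP: (labA Hsym Hirr Hcub Htf Hvalid auv aua av avc avd cd cu' du) => l.
  exact: (Fin Hsym Hirr Hcub Htf Hvalid auv br aua aub ab av bv cu avc avd cd cu' du cv l).
apply: (Fin Hsym Hirr Hcub Htf Hvalid auv br aua aub ab av bv cu avd avc _ du cu' _ l).
  by rewrite eq_sym.
by move=> r /cv; rewrite [(r == c) || _]orbC.
Qed.
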